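(* Let $k\ge1$, $i\in\{1,\dots,k\}$, and let $s_i^k$ be the $i$-th row of $G_k^\alpha$. For every $j\in\{0,1,\dots,s-1\}$, the vector $\gamma^js_i^k$ contains every element of the ideal $\langle\gamma^j\rangle$ exactly $q^{j+s(k-1)}$ times among its coordinates.
   Context: Let $R$ be a finite commutative chain ring with maximal ideal $\langle\gamma\rangle$, nilpotency index $s$ (least $s$ with $\gamma^s=0$) and residue field $R/\langle\gamma\rangle\cong\mathbb{F}_q$. Fix coset representatives $T=\{e_0,\dots,e_{q-1}\}$ with $e_0=0,e_1=1$, ordered $e_0<\dots<e_{q-1}$; each $r\in R$ is uniquely $\sum_{i=0}^{s-1}r_i\gamma^i$, $r_i\in T$; order $R$ by $x>y$ iff $x_i>y_i$ in $T$ for the largest $i$ with $x_i\neq y_i$; list $R=\{\rho_0,\dots,\rho_{q^s-1}\}$ increasingly. $\mathbf{a}^{(m)}$ is the constant vector of length $m$. Define $G_1^\alpha=(\rho_0\ \cdots\ \rho_{q^s-1})$ and, for $k>1$, $G_k^\alpha$ as the $k\times q^{sk}$ matrix of $q^s$ column blocks, the $j$-th having first row $\boldsymbol{\rho_j}^{(q^{s(k-1)})}$ and $G_{k-1}^\alpha$ below. *)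

(* Defs.v *)
From HB Require Import structures.
From mathcomp Require Import all_boot all_order all_algebra.
Set Implicit Arguments. Unset Strict Implicit. Unset Printing Implicit Defensive.
Import GRing.Theory.
Local Open Scope ring_scope.

Section ChainRing.
Variable R : finComNzRingType.

Definition is_ideal (I : {set R}) : bool :=
  [&& (0 : R) \in I,
      [forall x in I, [forall y in I, x + y \in I]] &
      [forall r : R, [forall x in I, r * x \in I]]].

Definition pideal (a : R) : {set R} := [set a * r | r : R].

Definition chain_ring : Prop :=
  forall I J : {set R}, is_ideal I -> is_ideal J -> I \subset J \/ J \subset I.

Definition maximal_ideal (M : {set R}) : Prop :=
  [/\ is_ideal M, M != [set: R] &
      forall J : {set R}, is_ideal J -> M \subset J -> J = M \/ J = [set: R]].

Definition nilpotency_index (g : R) (s : nat) : Prop :=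
  g ^+ s = 0 /\ forall m, (m < s)%N -> g ^+ m != 0.

Definition coset_reps (g : R) (q : nat) (e : nat -> R) : Prop :=
  (forall r : R, exists2 t, (t < q)%N & r - e t \in pideal g) /\
  (forall t t', (t < q)%N -> (t' < q)%N -> e t - e t' \in pideal g -> t = t').

(* rho_n : the n-th element of R in the increasing order; n written in base q
   with digits n_i = (n / q^i) mod q, rho_n = sum_{i<s} e_{n_i} g^i *)
Definition rho (g : R) (s q : nat) (e : nat -> R) (n : nat) : R :=
  \sum_(i < s) e ((n %/ q ^ i) %% q)%N * g ^+ i.

(* entry (i, c) (0-based) of G_k^alpha *)
Fixpoint Gent (g : R) (s q : nat) (e : nat -> R) (k i c : nat) : R :=
  match k with
  | 0 => 0
  | k'.+1 => if i == 0%N then rho g s q e (c %/ q ^ (s * k'))%N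
             else Gent g s q e k' i.-1 (c %% q ^ (s * k'))%N
  end.

Definition Galpha (g : R) (s q : nat) (e : nat -> R) (k : nat)
  : 'M[R]_(k, q ^ (s * k)) :=
  \matrix_(i < k, c < q ^ (s * k)) Gent g s q e k i c.

End ChainRing.

(* Main.v *)
Require Import Defs.
From HB Require Import structures.
From mathcomp Require Import all_boot all_order all_algebra.
Import GRing.Theory.
Local Open Scope ring_scope.

Lemma sum_block (F : nat -> nat) a b :
  (\sum_(c < a * b) F c = \sum_(u < a) \sum_(v < b) F (u * b + v))%N.
Proof.
elim: a => [|a IH]; first by rewrite mul0n !big_ord0.
rewrite mulSnr big_split_ord /= IH big_ord_recr /=.
congr (_ + _)%N.
Qed.

Section A.
Variable R : finComNzRingType.
Variables (g : R) (s q : nat) (e : nat -> R).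
Hypothesis qpos : (0 < q)%N.

Lemma Gent_count k i (P : pred R) : (i < k)%N ->
  (\sum_(c < q ^ (s * k)) P (Gent g s q e k i c) =
   q ^ (s * k.-1) * \sum_(m < q ^ s) P (rho g s q e m))%N.
Proof.
elim: k i => [//|k IH] i ik.
have bpos : (0 < q ^ (s * k))%N by rewrite expn_gt0 qpos.
rewrite mulnS expnD (sum_block (fun c => P (Gent g s q e k.+1 i c))) /=.
case: i ik => [|i] ik /=.
  rewrite big_distrr /=; apply: eq_bigr => u _.
  rewrite (eq_bigr (fun _ => nat_of_bool (P (rho g s q e u)))); last first.
    by move=> v _; rewrite divnMDl // divn_small // addn0.
  by rewrite sum_nat_const card_ord.
rewrite (eq_bigr (fun _ => q ^ (s * k.-1) * \sum_(m < q ^ s) P (rho g s q e m)))%N; last first.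
  move=> u _; rewrite -(IH i) //; apply: eq_bigr => v _.
  by rewrite -modnDm modnMl add0n modn_mod modn_small.
rewrite sum_nat_const card_ord mulnA -expnD; case: k IH ik {bpos} => // k _ _.
by rewrite mulnS.
Qed.
End A.
Lemma digits_inj q : (0 < q)%N -> forall s m m', (m < q ^ s)%N -> (m' < q ^ s)%N ->
  (forall t, (t < s)%N -> m %/ q ^ t %% q = m' %/ q ^ t %% q)%N -> m = m'.
Proof.
move=> qpos; elim=> [|s IH] m m'.
  by rewrite expn0 !ltnS !leqn0 => /eqP -> /eqP ->.
move=> hm hm' H.
have h0 := H 0%N isT; rewrite expn0 !divn1 in h0.
have E : (m %/ q = m' %/ q)%N.
  apply: IH; rewrite ?ltn_divLR // -?expnSr //.
  by move=> t ts; rewrite -!divnMA -expnS; apply: H.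
by rewrite (divn_eq m q) (divn_eq m' q) E h0.
Qed.

Section B.
Variable R : finComNzRingType.
Variables (g : R) (s q : nat) (e : nat -> R).
Hypothesis qpos : (0 < q)%N.

Definition phi (m : 'I_(q ^ s)) : {ffun 'I_s -> 'I_q} :=
  [ffun t : 'I_s => Ordinal (ltn_pmod (m %/ q ^ t) qpos)].

Lemma phi_bij : bijective phi.
Proof.
apply: inj_card_bij.
  move=> m m' /ffunP H; apply: val_inj; apply: (@digits_inj q qpos s m m' (ltn_ord m) (ltn_ord m')) => t ts.
  by have := H (Ordinal ts); rewrite !ffunE => /(congr1 val).
by rewrite card_ffun !card_ord.
Qed.

Lemma rho_count (P : pred R) :
  (\sum_(m < q ^ s) P (rho g s q e m) =
   \sum_(d : {ffun 'I_s -> 'I_q}) P (\sum_(i < s) e (d i) * g ^+ i)%R)%N.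
Proof.
rewrite (reindex phi) /=; last exact: onW_bij phi_bij.
by apply: eq_bigr => m _; rewrite /rho; congr (nat_of_bool (P _)); apply: eq_bigr => i _; rewrite ffunE.
Qed.
End B.
Lemma foldr_muln_map (T : Type) (f : T -> nat) r :
  foldr muln 1%N [seq f x | x <- r] = (\prod_(x <- r) f x)%N.
Proof. by elim: r => [|x r IH]; rewrite ?big_nil ?big_cons //= IH. Qed.

Section C.
Variable R : finComNzRingType.
Variables (g : R) (s q j : nat) (e : nat -> R).
Hypothesis qpos : (0 < q)%N.
Hypothesis Hj : (j < s)%N.
Hypothesis Hs : g ^+ s = 0.
Hypothesis He0 : e 0%N = 0.

Definition E (d : {ffun 'I_s -> 'I_q}) : R := \sum_(i < s) e (d i) * g ^+ i.

Let i0 : 'I_s := Ordinal Hj.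

Lemma sum_nat_ord (F : 'I_s -> R) :
  \sum_(i < s) F i = \sum_(0 <= t < s) F (insubd i0 t).
Proof.
rewrite big_mkord; apply: eq_bigr => i _; congr F; apply: val_inj.
by rewrite val_insubd ltn_ord.
Qed.

Lemma K d : g ^+ j * E d =
  \sum_(i < s) (if (i < s - j)%N then e (d i) * g ^+ (i + j) else 0).
Proof.
rewrite /E mulr_sumr; apply: eq_bigr => i _.
rewrite mulrCA -exprD addnC; case: ifP => // h.
have hs : (s <= i + j)%N by rewrite addnC -leq_subLR leqNgt h.
by rewrite -(subnK hs) exprD Hs mulr0 mulr0.
Qed.

Lemma sub_lt (i : 'I_s) : (i - j < s)%N.
Proof. exact: leq_ltn_trans (leq_subr j i) (ltn_ord i). Qed.

Definition sigma (d : {ffun 'I_s -> 'I_q}) : {ffun 'I_s -> 'I_q} :=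
  [ffun i : 'I_s => if (j <= i)%N then d (Ordinal (sub_lt i)) else Ordinal qpos].

Lemma S d : E (sigma d) = g ^+ j * E d.
Proof.
rewrite K /E !sum_nat_ord.
set D := fun u => e (d (insubd i0 u)).
transitivity (\sum_(0 <= t < s) (if (j <= t)%N then D (t - j)%N * g ^+ t else 0)).
  apply: eq_big_nat => t /andP[_ ts]; rewrite ffunE.
  have vt : nat_of_ord (insubd i0 t) = t by rewrite val_insubd ts.
  have -> : (j <= insubd i0 t)%N = (j <= t)%N by rewrite vt.
  have -> : g ^+ (insubd i0 t) = g ^+ t by rewrite vt.
  case: ifP => jt; last by rewrite He0 mul0r.
  rewrite /D; congr (e (nat_of_ord (d _)) * _); apply: val_inj.
  by rewrite /= vt val_insubd (leq_ltn_trans (leq_subr j t) ts).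
transitivity (\sum_(0 <= t < s) (if (t < s - j)%N then D t * g ^+ (t + j) else 0)); last first.
  apply: eq_big_nat => t /andP[_ ts]; rewrite val_insubd ts //.
rewrite (@big_cat_nat _ _ _ j 0 s _ _ (leq0n j) (ltnW Hj)) /=.
rewrite big_nat_cond big1 ?add0r; last first.
  by move=> t /andP[/andP[_ tj] _]; rewrite leqNgt tj.
rewrite (@big_cat_nat _ _ _ (s - j) 0 s _ _ (leq0n (s - j)) (leq_subr j s)) /=.
rewrite [X in _ = _ + X]big_nat_cond [X in _ = _ + X]big1 ?addr0; last first.
  by move=> t /andP[/andP[h _] _]; rewrite ltnNge h.
rewrite -{1}(add0n j) big_addn; apply: eq_big_nat => t /andP[_ ts].
by rewrite ts leq_addl addnK.
Qed.


Hypothesis Hexp : forall r : R, exists! d : {ffun 'I_s -> 'I_q},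
            r = \sum_(i < s) e (d i) * g ^+ i.

Lemma count_main x : x \in pideal (g ^+ j) ->
  (\sum_(d : {ffun 'I_s -> 'I_q}) nat_of_bool (g ^+ j * E d == x)%R)%N = (q ^ j)%N.
Proof.
case/imsetP => y _ ->.
have [dy [Edy _]] := Hexp y.
have char d : (g ^+ j * E d == g ^+ j * y) =
    [forall t : 'I_s, (t < s - j)%N ==> (d t == dy t)].
  apply/eqP/forallP => [H t|H].
    have [d0 [_ U]] := Hexp (g ^+ j * y).
    have e1 : sigma d = sigma dy.
      by rewrite -(U (sigma d)) ?(U (sigma dy)) // -/(E _) S // ?Edy // H.
    apply/implyP => ht.
    have htj : (t + j < s)%N by rewrite addnC -ltn_subRL.
    have := congr1 (fun f : {ffun 'I_s -> 'I_q} => f (Ordinal htj)) e1; rewrite /= !ffunE /= leq_addl.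
    move=> h; apply/eqP.
    have -> : t = Ordinal (sub_lt (Ordinal htj)) by apply: val_inj; rewrite /= addnK.
    by rewrite h.
  rewrite Edy -/(E dy) !K; apply: eq_bigr => i _; case: ifP => // hi.
  by have /implyP/(_ hi)/eqP -> := H i.
rewrite (eq_bigr (fun d : {ffun 'I_s -> 'I_q} => if [forall t : 'I_s, (t < s - j)%N ==> (d t == dy t)] then 1 else 0)%N); last first.
  by move=> d _; rewrite char; case: ifP.
rewrite -big_mkcond sum1_card.
pose F := fun t : 'I_s => if (t < s - j)%N then pred1 (dy t) else predT.
rewrite (eq_card (B := family F)); last first.
  move=> d; rewrite !inE; apply/forallP/familyP => H t; have := H t; rewrite /F;
  by case: ifP => //= ->.
rewrite card_family foldr_muln_map big_enum /=.
rewrite (eq_bigr (fun t : 'I_s => if (t < s - j)%N then 1 else q)%N); last first.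
  by move=> t _; rewrite /F; case: ifP => _; rewrite ?card1 // (eq_card (B := 'I_q)) ?card_ord.
rewrite -(big_mkord xpredT (fun t => if (t < s - j)%N then 1%N else q)).
rewrite (@big_cat_nat _ _ _ (s - j) 0 s _ _ (leq0n (s - j)) (leq_subr j s)) /=.
rewrite big_nat_cond big1 ?mul1n; last by move=> t /andP[/andP[_ ->]].
rewrite (eq_big_nat _ _ (F2 := fun _ => q)); last first.
  by move=> t /andP[h _]; rewrite ltnNge h.
by rewrite prod_nat_const_nat subKn // ltnW.
Qed.
End C.

Theorem lemma3p6 (R : finComNzRingType) (gamma : R) (s q : nat) (e : nat -> R)
  (Hchain : chain_ring R)
  (Hmax : maximal_ideal (pideal gamma))
  (Hnil : nilpotency_index gamma s)
  (Hreps : coset_reps gamma q e)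
  (He0 : e 0%N = 0) (He1 : e 1%N = 1)
  (Hexp : forall r : R, exists! d : {ffun 'I_s -> 'I_q},
            r = \sum_(i < s) e (d i) * gamma ^+ i)
  (k : nat) (Hk : (1 <= k)%N) (i : 'I_k) (j : nat) (Hj : (j < s)%N) :
  forall x : R, x \in pideal (gamma ^+ j) ->
    #|[set c : 'I_(q ^ (s * k)) | gamma ^+ j * Galpha gamma s q e k i c == x]|
      = (q ^ (j + s * (k - 1)))%N.
Proof.
move=> x hx.
have qpos : (0 < q)%N.
  have [d _] := Hexp 0.
  exact: leq_ltn_trans (leq0n _) (ltn_ord (d (Ordinal Hj))).
have Hs : gamma ^+ s = 0 by case: Hnil.
rewrite -sum1_card big_mkcond /=.
rewrite (eq_bigr (fun c : 'I_(q ^ (s * k)) =>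
   nat_of_bool ((gamma ^+ j * Gent gamma s q e k i c == x)%R))); last first.
  by move=> c _; rewrite inE mxE; case: eqP.
rewrite (@Gent_count R gamma s q e qpos k i (fun r => gamma ^+ j * r == x)) //.
rewrite (@rho_count R gamma s q e qpos (fun r => gamma ^+ j * r == x)) /=.
rewrite (@count_main R gamma s q j e qpos Hj Hs He0 Hexp x hx).
by rewrite subn1 mulnC -expnD.
Qed.
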